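(* Let $V$ be a real vector space of dimension $n$, $1\le k\le n-1$, and let $L\subseteq V\oplus\wedge^kV^*$ be weakly lagrangian. Then $L\cap V=\{0\}$ if and only if $L=\{\Lambda(\alpha)+\alpha\mid\alpha\in S\}$ is the graph of a higher Poisson structure $(S,\Lambda)$ on $V$. In this case, $L$ is lagrangian if and only if $L$ is standard (i.e. $\mathrm{rank}(\Lambda)=n$ or $\mathrm{rank}(\Lambda)\le n-k$) and $\mathrm{Ann}(\mathrm{Im}(\Lambda))=\ker(\Lambda)$.
   Context: On $V\oplus\wedge^kV^*$ consider the pairing $\langle X+\alpha,Y+\beta\rangle=i_X\beta+i_Y\alpha\in\wedge^{k-1}V^*$; $L^\perp$ is the orthogonal of $L$; $L$ is isotropic if $L\subseteq L^\perp$, lagrangian if $L=L^\perp$, and weakly lagrangian if isotropic and $L\cap V=\mathrm{pr}_2(L)^\circ$, where $\mathrm{pr}_2$ is the projection to $\wedge^kV^*$ and for $S\subseteq\wedge^kV^*$, $S^\circ=\{X\in V\mid i_X\eta=0\ \forall\eta\in S\}$. For $E\subseteq V$, $\mathrm{Ann}(E)=\{\alpha\in\wedge^kV^*\mid i_Y\alpha=0\ \forall Y\in E\}$. An isotropic $L$ is standard if $\mathrm{Ann}(E)^\circ=E$ where $E=\mathrm{pr}_1(L)$, equivalently $\dim E=n$ or $\dim E\le n-k$. A higher Poisson structure on $V$ is a pair $(S,\Lambda)$ with $S\subseteq\wedge^kV^*$ a subspace and $\Lambda:S\to V$ linear such that $S^\circ=\{0\}$ and $i_{\Lambda(\alpha)}\beta=-i_{\Lambda(\beta)}\alpha$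 for all $\alpha,\beta\in S$. *)

(* Defs.v *)
(* V = 'rV[R]_n for R : realType; k-forms on V are
   alternating multilinear maps ('I_k -> V) -> R. *)
From HB Require Import structures.
From mathcomp Require Import all_boot all_order all_algebra.
From mathcomp Require Import reals.
Set Implicit Arguments. Unset Strict Implicit. Unset Printing Implicit Defensive.
Import Order.TTheory GRing.Theory Num.Theory.
Local Open Scope ring_scope.

Section Forms.
Variables (R : realType) (n : nat).
Notation V := 'rV[R]_n.

Definition mform (k : nat) := ('I_k -> V) -> R.

Definition zeroF (k : nat) : mform k := fun _ => 0.
Arguments zeroF : clear implicits.
Definition lincombF k (a : R) (al be : mform k) : mform k :=
  fun v => a * al v + be v.

Definition set_slot k (v : 'I_k -> V) (i : 'I_k) (x : V) : 'I_k -> V :=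
  fun j => if j == i then x else v j.

Definition multilinear k (al : mform k) : Prop :=
  forall (v : 'I_k -> V) (i : 'I_k) (a : R) (x y : V),
    al (set_slot v i (a *: x + y)) = a * al (set_slot v i x) + al (set_slot v i y).

Definition alternating k (al : mform k) : Prop :=
  forall (v : 'I_k -> V) (i j : 'I_k), i != j -> v i = v j -> al v = 0.

Definition is_kform k (al : mform k) : Prop := multilinear al /\ alternating al.

Definition contr m (X : V) (al : mform m.+1) : mform m :=
  fun ys => al (fun j => match unlift ord0 j with
                         | Some j' => ys j'
                         | None => X end).

Definition pairing m (e1 e2 : V * mform m.+1) : mform m :=
  fun ys => contr e1.1 e2.2 ys + contr e2.1 e1.2 ys.

Definition is_subspace_dir m (L : V * mform m.+1 -> Prop) : Prop :=
  [/\ forall e, L e -> is_kform e.2,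
      L (0, zeroF m.+1) &
      forall a e1 e2, L e1 -> L e2 ->
        L (a *: e1.1 + e2.1, lincombF a e1.2 e2.2)].

Definition is_subspace_forms k (S : mform k -> Prop) : Prop :=
  [/\ forall al, S al -> is_kform al,
      S (zeroF k) &
      forall a al be, S al -> S be -> S (lincombF a al be)].

Definition orth m (L : V * mform m.+1 -> Prop) : V * mform m.+1 -> Prop :=
  fun e => is_kform e.2 /\ forall l, L l -> pairing e l = zeroF m.

Definition isotropic m (L : V * mform m.+1 -> Prop) : Prop :=
  forall e, L e -> orth L e.

Definition lagrangian m (L : V * mform m.+1 -> Prop) : Prop :=
  forall e, L e <-> orth L e.

Definition capV m (L : V * mform m.+1 -> Prop) : V -> Prop :=
  fun X => L (X, zeroF m.+1).

Definition pr1 m (L : V * mform m.+1 -> Prop) : V -> Prop :=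
  fun X => exists al, L (X, al).
Definition pr2 m (L : V * mform m.+1 -> Prop) : mform m.+1 -> Prop :=
  fun al => exists X, L (X, al).

Definition polar m (S : mform m.+1 -> Prop) : V -> Prop :=
  fun X => forall eta, S eta -> contr X eta = zeroF m.

Definition Ann m (E : V -> Prop) : mform m.+1 -> Prop :=
  fun al => is_kform al /\ forall Y, E Y -> contr Y al = zeroF m.

Definition weakly_lagrangian m (L : V * mform m.+1 -> Prop) : Prop :=
  isotropic L /\ forall X, capV L X <-> polar (pr2 L) X.

Definition standard m (L : V * mform m.+1 -> Prop) : Prop :=
  forall X, polar (Ann (m:=m) (pr1 L)) X <-> pr1 L X.

Definition higher_poisson m (S : mform m.+1 -> Prop) (Lam : mform m.+1 -> V) : Prop :=
  [/\ is_subspace_forms S,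
      (forall a al be, S al -> S be ->
         Lam (lincombF a al be) = a *: Lam al + Lam be),
      (forall X, polar S X -> X = 0) &
      (forall al be, S al -> S be ->
         contr (Lam al) be = (fun ys => - contr (Lam be) al ys))].

Definition is_graph m (L : V * mform m.+1 -> Prop) (S : mform m.+1 -> Prop)
  (Lam : mform m.+1 -> V) : Prop :=
  forall X al, L (X, al) <-> (S al /\ X = Lam al).

Definition imL m (S : mform m.+1 -> Prop) (Lam : mform m.+1 -> V) : V -> Prop :=
  fun X => exists al, S al /\ X = Lam al.
Definition kerL m (S : mform m.+1 -> Prop) (Lam : mform m.+1 -> V) : mform m.+1 -> Prop :=
  fun al => S al /\ Lam al = 0.

End Forms.

(* Main.v *)
Require Import Defs.
From HB Require Import structures.
From mathcomp Require Import all_boot all_order all_algebra.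
From mathcomp Require Import reals.
From Stdlib Require Import FunctionalExtensionality ClassicalEpsilon Classical.
From mathcomp Require Import ring lra zify.
Set Implicit Arguments. Unset Strict Implicit. Unset Printing Implicit Defensive.
Import Order.TTheory GRing.Theory Num.Theory.
Local Open Scope ring_scope.


Section Basics.
Variables (R : realType) (n : nat).
Notation V := 'rV[R]_n.

Definition cons m (x : V) (w : 'I_m -> V) : 'I_m.+1 -> V :=
  fun j => match unlift ord0 j with Some j' => w j' | None => x end.
Definition tl m (v : 'I_m.+1 -> V) : 'I_m -> V := fun j => v (lift ord0 j).

Lemma contrE m X (al : mform R n m.+1) w : contr X al w = al (cons X w).
Proof. by []. Qed.

Lemma cons0 m x (w : 'I_m -> V) : cons x w ord0 = x.
Proof. by rewrite /cons unlift_none. Qed.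

Lemma consS m x (w : 'I_m -> V) j : cons x w (lift ord0 j) = w j.
Proof. by rewrite /cons liftK. Qed.

Lemma tl_cons m x (w : 'I_m -> V) : tl (cons x w) = w.
Proof. by apply: functional_extensionality => j; rewrite /tl consS. Qed.

Lemma cons_tl m (v : 'I_m.+1 -> V) : cons (v ord0) (tl v) = v.
Proof.
apply: functional_extensionality => j; rewrite /cons /tl.
by case: unliftP => [j'|] ->.
Qed.

Lemma cons_set0 m x z (w : 'I_m -> V) : cons x w = set_slot (cons z w) ord0 x.
Proof.
apply: functional_extensionality => j; rewrite /set_slot /cons.
case: unliftP => [j'|] ->; last by rewrite eqxx.
by rewrite eq_sym (negbTE (neq_lift _ _)).
Qed.

Lemma cons_setS m x (w : 'I_m -> V) j y :
  cons x (set_slot w j y) = set_slot (cons x w) (lift ord0 j) y.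
Proof.
apply: functional_extensionality => k; rewrite /set_slot /cons.
case: unliftP => [k'|] ->.
  by rewrite (inj_eq (@lift_inj _ ord0)).
by rewrite (negbTE (neq_lift _ _)).
Qed.

Lemma set_slotC k (v : 'I_k -> V) i j x y : i != j ->
  set_slot (set_slot v i x) j y = set_slot (set_slot v j y) i x.
Proof.
move=> ij; apply: functional_extensionality => l; rewrite /set_slot.
case: (eqVneq l j) => [->|lj]; first by rewrite eq_sym (negbTE ij).
by [].
Qed.

Lemma set_slot_id k (v : 'I_k -> V) i : set_slot v i (v i) = v.
Proof.
apply: functional_extensionality => l; rewrite /set_slot.
by case: (eqVneq l i) => [->|].
Qed.

Lemma set_slot_set k (v : 'I_k -> V) i x y :
  set_slot (set_slot v i x) i y = set_slot v i y.
Proof.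
apply: functional_extensionality => l; rewrite /set_slot.
by case: (eqVneq l i).
Qed.

Lemma set_slotE k (v : 'I_k -> V) i x : set_slot v i x i = x.
Proof. by rewrite /set_slot eqxx. Qed.

Lemma ml_zero k (al : mform R n k) v i :
  multilinear al -> al (set_slot v i 0) = 0.
Proof.
move=> ml; have := ml v i 1 0 0; rewrite scale1r addr0 mul1r => h.
by have := congr1 (fun t => t - al (set_slot v i 0)) h; rewrite /= subrr addrK.
Qed.

Lemma ml_add k (al : mform R n k) v i x y :
  multilinear al -> al (set_slot v i (x + y)) = al (set_slot v i x) + al (set_slot v i y).
Proof. by move=> ml; have := ml v i 1 x y; rewrite scale1r mul1r. Qed.

Lemma kf_swap k (al : mform R n k) v i j x y : is_kform al -> i != j ->
  al (set_slot (set_slot v i x) j y) = - al (set_slot (set_slot v i y) j x).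
Proof.
move=> [ml alt] ij.
pose f a b := al (set_slot (set_slot v i a) j b).
have f0 a : f a a = 0.
  apply: (alt _ i j ij); rewrite /set_slot eqxx (negbTE ij).
  by rewrite eq_sym (negbTE ij) eqxx.
have fl a b c : f (a + b) c = f a c + f b c.
  by rewrite /f !(set_slotC _ _ _ ij) ml_add.
have fr a b c : f c (a + b) = f c a + f c b by rewrite /f ml_add.
have := f0 (x + y); rewrite fl !fr !f0 add0r addr0 => /eqP.
by rewrite addr_eq0 => /eqP.
Qed.

Lemma kf_contr m X (al : mform R n m.+1) : is_kform al -> is_kform (contr X al).
Proof.
move=> [ml alt]; split.
  by move=> v i a x y; rewrite !contrE !cons_setS ml.
move=> v i j ij vij; rewrite contrE; apply: (alt _ (lift ord0 i) (lift ord0 j)).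
  by rewrite (inj_eq (@lift_inj _ ord0)).
by rewrite !consS.
Qed.

Lemma kf_lincomb k a (al be : mform R n k) :
  is_kform al -> is_kform be -> is_kform (lincombF a al be).
Proof.
move=> [ml1 alt1] [ml2 alt2]; split.
  move=> v i b x y; rewrite /lincombF ml1 ml2; ring.
by move=> v i j ij vij; rewrite /lincombF (alt1 _ _ _ ij vij) (alt2 _ _ _ ij vij); ring.
Qed.

Lemma kf_zero k : is_kform (@zeroF R n k).
Proof. by split => [v i a x y|v i j _ _]; rewrite /zeroF //; ring. Qed.

End Basics.


Section Ext.
Variables (R : realType) (n : nat) (P : 'M[R]_n).
Hypothesis hP : P *m P = P.
Notation V := 'rV[R]_n.

Definition pp (v : V) : V := v *m P.
Definition qq (v : V) : V := v - v *m P.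

Lemma ppK a : pp (pp a) = pp a. Proof. by rewrite /pp -mulmxA hP. Qed.
Lemma qqp a : qq (pp a) = 0. Proof. by rewrite /qq /pp -mulmxA hP subrr. Qed.
Lemma pqq a : pp (qq a) = 0.
Proof. by rewrite /pp /qq mulmxBl -mulmxA hP subrr. Qed.
Lemma pp_lin b x y : pp (b *: x + y) = b *: pp x + pp y.
Proof. by rewrite /pp mulmxDl scalemxAl. Qed.
Lemma qq_lin b x y : qq (b *: x + y) = b *: qq x + qq y.
Proof. by rewrite /qq mulmxDl -scalemxAl scalerBr opprD addrACA. Qed.
Lemma pq_split x : x = pp x + qq x.
Proof. by rewrite /pp /qq addrC subrK. Qed.

Definition shiftF m (phi : V -> mform R n m.+1) (c : V) : V -> mform R n m :=
  fun Y w => - phi Y (cons c w).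

Fixpoint Ext (m : nat) : (V -> mform R n m) -> mform R n m.+1 :=
  match m return (V -> mform R n m) -> mform R n m.+1 with
  | 0 => fun phi v => phi (pp (v ord0)) (tl v)
  | m'.+1 => fun phi v => phi (pp (v ord0)) (tl v) + Ext (shiftF phi (qq (v ord0))) (tl v)
  end.

Lemma Ext0 (phi : V -> mform R n 0) x w : Ext phi (cons x w) = phi (pp x) w.
Proof. by rewrite /= cons0 tl_cons. Qed.

Lemma ExtS m (phi : V -> mform R n m.+1) x w :
  Ext phi (cons x w) = phi (pp x) w + Ext (shiftF phi (qq x)) w.
Proof. by rewrite /= cons0 tl_cons. Qed.

Lemma Ext_zero m (psi : V -> mform R n m) : (forall Y w, psi Y w = 0) ->
  forall v, Ext psi v = 0.
Proof.
elim: m psi => [|m IH] psi h v; rewrite -(cons_tl v).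
  by rewrite Ext0 h.
rewrite ExtS h add0r IH // => Y w; by rewrite /shiftF h oppr0.
Qed.

Lemma Ext_lin m a (p1 p2 p3 : V -> mform R n m) :
  (forall Y w, p3 Y w = a * p1 Y w + p2 Y w) ->
  forall v, Ext p3 v = a * Ext p1 v + Ext p2 v.
Proof.
elim: m a p1 p2 p3 => [|m IH] a p1 p2 p3 h v; rewrite -(cons_tl v).
  by rewrite !Ext0 h.
move: (v ord0) (tl v) => x w.
rewrite !ExtS h (IH a (shiftF p1 (qq x)) (shiftF p2 (qq x))); first ring.
by move=> Y w0; rewrite /shiftF h; ring.
Qed.

Lemma Ext_kill m (psi : V -> mform R n m) u :
  pp u = 0 -> (forall w, psi 0 w = 0) ->
  (forall Y w j, w j = u -> psi Y w = 0) ->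
  forall v j, v j = u -> Ext psi v = 0.
Proof.
elim: m psi => [|m IH] psi pu h0 hk v j vj; rewrite -(cons_tl v).
  have j0 : j = ord0 by apply/val_inj; case: j {vj} => [[]].
  subst j; by rewrite Ext0 vj pu h0.
rewrite ExtS; case: (unliftP ord0 j) vj => [j'|] -> vj.
  have e1 : psi (pp (v ord0)) (tl v) = 0 by apply: (hk _ _ j').
  rewrite e1 add0r; apply: (IH _ pu _ _ (tl v) j' vj).
    by move=> w; rewrite /shiftF h0 oppr0.
  move=> Y w k wk; rewrite /shiftF (hk _ _ (lift ord0 k)) ?oppr0 //.
  by rewrite consS.
rewrite vj (pu : pp u = 0) h0 add0r; apply: Ext_zero => Y w.
rewrite /shiftF (hk _ _ ord0) ?oppr0 // cons0.
by rewrite /qq; move: pu; rewrite /pp => ->; rewrite subr0.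
Qed.

Lemma Ext_contr m (phi : V -> mform R n m) a w :
  (forall Y, multilinear (phi Y)) -> Ext phi (cons (pp a) w) = phi (pp a) w.
Proof.
case: m phi w => [|m] phi w hml; first by rewrite Ext0 ppK.
rewrite ExtS ppK qqp (Ext_zero (psi := shiftF phi 0)) ?addr0 //.
move=> Y v; rewrite /shiftF (cons_set0 _ 0) ml_zero ?oppr0 //.
Qed.

Definition linF m (phi : V -> mform R n m) :=
  forall b x y w, phi (b *: x + y) w = b * phi x w + phi y w.

Lemma linF0 m (phi : V -> mform R n m) w : linF phi -> phi 0 w = 0.
Proof.
move=> h; have := h (-1) 0 0 w; rewrite scaler0 addr0.
move=> e; have : phi 0 w = 0 * phi 0 w by rewrite {1}e; ring.
by rewrite mul0r.
Qed.

Lemma shift_ml m (phi : V -> mform R n m.+1) c Y :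
  multilinear (phi Y) -> multilinear (shiftF phi c Y).
Proof. by move=> ml v i b x y; rewrite /shiftF !cons_setS ml; ring. Qed.

Lemma shift_lin m (phi : V -> mform R n m.+1) c : linF phi -> linF (shiftF phi c).
Proof. by move=> h b x y w; rewrite /shiftF h; ring. Qed.

Lemma Ext_ml m (phi : V -> mform R n m) :
  (forall Y, multilinear (phi Y)) -> linF phi -> multilinear (Ext phi).
Proof.
elim: m phi => [|m IH] phi hml hlin v i b x y; rewrite -(cons_tl v).
  have -> : i = ord0 by apply/val_inj; case: i => [[]].
  by rewrite -!cons_set0 !Ext0 pp_lin hlin.
case: (unliftP ord0 i) => [i'|] ->.
  rewrite -!cons_setS !ExtS hml (IH _ (fun Y => shift_ml _ (hml Y)) (shift_lin _ hlin)).
  ring.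
rewrite -!cons_set0 !ExtS pp_lin hlin qq_lin.
rewrite (Ext_lin (a := b) (p1 := shiftF phi (qq x)) (p2 := shiftF phi (qq y))); first ring.
by move=> Y w; rewrite /shiftF (cons_set0 _ 0) hml -!cons_set0; ring.
Qed.


Definition compatF m (phi : V -> mform R n m) :=
  forall a b w i, phi (pp b) (set_slot w i (pp a)) = - phi (pp a) (set_slot w i (pp b)).

Lemma swap_cons k (al : mform R n k.+1) (t : 'I_k -> V) j x y :
  is_kform al -> al (cons x (set_slot t j y)) = - al (cons y (set_slot t j x)).
Proof.
move=> kf; rewrite !cons_setS (cons_set0 x 0) (cons_set0 y 0).
by apply: kf_swap => //; apply: neq_lift.
Qed.

Lemma shift_compat m (phi : V -> mform R n m.+1) c :
  compatF phi -> compatF (shiftF phi c).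
Proof.
by move=> h a b w i; rewrite /shiftF !cons_setS h opprK.
Qed.

Lemma kf_shift m (phi : V -> mform R n m.+1) c Y :
  is_kform (phi Y) -> is_kform (shiftF phi c Y).
Proof.
move=> kf; split; first by apply: shift_ml; case: kf.
move=> v i j ij vij; rewrite /shiftF; case: kf => _ alt.
rewrite (alt _ (lift ord0 i) (lift ord0 j)) ?oppr0 //.
  all: try by rewrite (inj_eq (@lift_inj _ ord0)).
all: by rewrite !consS.
Qed.

Lemma Ext_alt m (phi : V -> mform R n m) :
  (forall Y, is_kform (phi Y)) -> linF phi -> compatF phi -> alternating (Ext phi).
Proof.
elim: m phi => [|m IH] phi hkf hlin hc v i j ij vij.
  by move: ij; rewrite (ord1 i) (ord1 j) eqxx.
have hml Y : multilinear (phi Y) by case: (hkf Y).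
have kfE c : is_kform (Ext (shiftF phi c)).
  split; first by apply: Ext_ml; [move=> Y; apply: shift_ml | apply: shift_lin].
  by apply: IH => [Y||]; [apply: kf_shift | apply: shift_lin | apply: shift_compat].
have helper x w j' : w j' = x -> Ext phi (cons x w) = 0.
  move=> wj.
  have e : set_slot w j' (pp x + qq x) = w by rewrite -pq_split -wj set_slot_id.
  have hE : multilinear (Ext (shiftF phi (qq x))) by case: (kfE (qq x)).
  rewrite -e ExtS ml_add // (ml_add _ _ _ _ hE).
  have t1 : phi (pp x) (set_slot w j' (pp x)) = 0.
    by have := hc x x w j'; lra.
  have t4 : Ext (shiftF phi (qq x)) (set_slot w j' (qq x)) = 0.
    apply: (Ext_kill (u := qq x) _ _ _ (j := j')) => //.
    - by apply: pqq.
    - by move=> w0; apply: linF0; apply: shift_lin.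
    - move=> Y w0 k wk; rewrite /shiftF; case: (hkf Y) => _ alt.
      rewrite (alt _ ord0 (lift ord0 k)) ?oppr0 //.
      all: try by apply: neq_lift.
      by rewrite cons0 consS.
    - by apply: set_slotE.
  have t3 : Ext (shiftF phi (qq x)) (set_slot w j' (pp x)) =
            - phi (pp x) (set_slot w j' (qq x)).
    rewrite -(cons_tl w); move: (w ord0) (tl w) => w0 tw.
    case: (unliftP ord0 j') => [j''|] ->.
      rewrite -!cons_setS (swap_cons _ _ _ _ (kfE _)) Ext_contr; last first.
        by move=> Y; apply: shift_ml.
      by rewrite /shiftF opprK (swap_cons _ _ _ _ (hkf _)).
    rewrite -!cons_set0 Ext_contr //.
    by move=> Y; apply: shift_ml.
  rewrite t1 t3 t4; ring.
rewrite -(cons_tl v) in vij *; move: (v ord0) (tl v) vij => x w vij.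
case: (unliftP ord0 i) ij vij => [i'|] -> ij; case: (unliftP ord0 j) ij => [j'|] -> ij.
- rewrite !consS => vij; rewrite ExtS.
  have ij' : i' != j' by move: ij; rewrite (inj_eq (@lift_inj _ ord0)).
  case: (hkf (pp x)) => _ alt; rewrite (alt _ _ _ ij' vij) add0r.
  by case: (kfE (qq x)) => _ alt2; apply: (alt2 _ _ _ ij' vij).
- by rewrite consS cons0 => vij; apply: (helper _ _ i').
- by rewrite consS cons0 => vij; apply: (helper _ _ j').
- by rewrite eqxx in ij.
Qed.

End Ext.


Section Main.
Variables (R : realType) (n m : nat).
Notation V := 'rV[R]_n.
Notation F := (mform R n m.+1).

Lemma lincomb_m1 (al : F) : lincombF (-1) al al = @zeroF R n m.+1.
Proof. by apply: functional_extensionality => v; rewrite /lincombF /zeroF; ring. Qed.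

Lemma lincomb_m1z : lincombF (-1) (@zeroF R n m.+1) (@zeroF R n m.+1) = @zeroF R n m.+1.
Proof. exact: lincomb_m1. Qed.

Lemma contr0 k (al : mform R n k.+1) : is_kform al -> contr 0 al = @zeroF R n k.
Proof.
case=> ml _; apply: functional_extensionality => w.
by rewrite contrE (cons_set0 _ 0) ml_zero.
Qed.

Lemma part1_fwd (L : V * F -> Prop) :
  is_subspace_dir L -> weakly_lagrangian L -> (forall X, capV L X -> X = 0) ->
  exists S Lam, higher_poisson S Lam /\ is_graph L S Lam.
Proof.
move=> [hkf h0 hcl] [hiso hwl] hcap.
have uniq X Y al : L (X, al) -> L (Y, al) -> X = Y.
  move=> h1 h2; have := hcl (-1) _ _ h1 h2; rewrite /= lincomb_m1 => h.
  have := hcap _ h; rewrite scaleN1r => /eqP; rewrite addrC subr_eq0 => /eqP.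
  by [].
pose Lam (al : F) := epsilon (inhabits (0 : V)) (fun X => L (X, al)).
have LamP al : pr2 L al -> L (Lam al, al).
  by move=> [X hX]; apply: (epsilon_spec (inhabits (0 : V)) (fun X => L (X, al))); exists X.
exists (pr2 L), Lam; split; last first.
  move=> X al; split.
    by move=> h; split; [exists X | apply: (uniq _ _ al) => //; apply: LamP; exists X].
  by move=> [hS ->]; apply: LamP.
split.
- split.
  + by move=> al [X hX]; apply: (hkf _ hX).
  + by exists 0.
  + by move=> a al be [X hX] [Y hY]; exists (a *: X + Y); apply: (hcl _ _ _ hX hY).
- move=> a al be hal hbe; symmetry; apply: (uniq _ _ (lincombF a al be)).
    by apply: (hcl _ _ _ (LamP _ hal) (LamP _ hbe)).
  by apply: LamP; case: hal => X hX; case: hbe => Y hY; exists (a *: X + Y); apply: (hcl _ _ _ hX hY).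
- by move=> X hX; apply: hcap; apply/hwl.
- move=> al be hal hbe; apply: functional_extensionality => ys.
  have := (hiso _ (LamP _ hal)).2 _ (LamP _ hbe).
  move=> /(congr1 (fun f => f ys)); rewrite /pairing /zeroF /= => h.
  by apply/eqP; rewrite -addr_eq0; apply/eqP.
Qed.

Lemma Lam0 (S : F -> Prop) Lam : higher_poisson S Lam -> Lam (@zeroF R n m.+1) = 0.
Proof.
move=> [[_ hS0 _] hlin _ _]; have := hlin (-1) _ _ hS0 hS0.
by rewrite lincomb_m1 scaleN1r addNr.
Qed.

Lemma part1_bwd (L : V * F -> Prop) S Lam :
  higher_poisson S Lam -> is_graph L S Lam -> forall X, capV L X -> X = 0.
Proof.
move=> hp hg X /hg [_ ->]; exact: Lam0 hp.
Qed.

Lemma ker_Ann (S : F -> Prop) Lam al :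
  higher_poisson S Lam -> kerL S Lam al -> Ann (imL S Lam) al.
Proof.
move=> [[hkf _ _] _ _ hsk] [hS hL0]; split; first by apply: hkf.
move=> Y [be [hbe ->]]; rewrite hsk // hL0 contr0 ?hkf //.
  by apply: functional_extensionality => w; rewrite /zeroF oppr0.
by apply: hkf.
Qed.

Lemma pr1_imL (L : V * F -> Prop) S Lam Y :
  is_graph L S Lam -> pr1 L Y <-> imL S Lam Y.
Proof.
move=> hg; split.
  by move=> [al /hg [h ->]]; exists al.
by move=> [al [h ->]]; exists al; apply/hg.
Qed.


Lemma part2_Ann_ker (L : V * F -> Prop) S Lam :
  higher_poisson S Lam -> is_graph L S Lam -> lagrangian L ->
  forall al, Ann (m:=m) (imL S Lam) al <-> kerL S Lam al.
Proof.
move=> hp hg hlag al; split; last exact: ker_Ann.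
move=> [kf h].
have : L (0, al).
  apply/hlag; split => // -[Y be] /hg [hbe ->].
  apply: functional_extensionality => ys; rewrite /pairing /=.
  have [[hkf _ _] _ _ _] := hp.
  rewrite (contr0 (hkf _ hbe)) h; last by exists be.
  by rewrite /zeroF addr0.
by move/hg => [hS e]; split.
Qed.

Lemma part2_bwd (L : V * F -> Prop) S Lam :
  is_subspace_dir L -> weakly_lagrangian L ->
  higher_poisson S Lam -> is_graph L S Lam ->
  standard L -> (forall al, Ann (m:=m) (imL S Lam) al <-> kerL S Lam al) ->
  lagrangian L.
Proof.
move=> hL [hiso hwl] hp hg hstd hak [X be]; split; first exact: hiso.
move=> [kfb horth].
have [[hkf hS0 hScl] hlin _ _] := hp.
have hX : pr1 L X.
  apply/hstd => eta [kfe he].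
  have : Ann (imL S Lam) eta.
    by split => // Y hY; apply: he; apply/(pr1_imL _ hg).
  move/hak => [hSe hLe].
  have hL0 : L (0, eta) by apply/hg.
  have := horth _ hL0; rewrite /pairing /= (contr0 kfb) => e.
  apply: functional_extensionality => ys.
  by have := congr1 (fun f => f ys) e; rewrite /zeroF addr0.
case: hX => ga /hg [hga eX]; subst X.
pose de := lincombF (-1) ga be.
have hde : Ann (imL S Lam) de.
  split; first by apply: kf_lincomb => //; apply: hkf.
  move=> Y [al [hal ->]]; apply: functional_extensionality => ys.
  have h1 := congr1 (fun f => f ys) (horth _ (proj2 (hg _ _) (conj hal erefl))).
  have h2 := congr1 (fun f => f ys) ((hiso _ (proj2 (hg _ _) (conj hga erefl))).2 _
                (proj2 (hg _ _) (conj hal erefl))).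
  move: h1 h2; rewrite /pairing /zeroF /= !contrE /de /lincombF => h1 h2.
  lra.
move/hak: hde => [hSde hLde].
have -> : be = lincombF 1 ga de.
  by apply: functional_extensionality => w; rewrite /de /lincombF; ring.
apply/hg; split; first by apply: hScl.
by rewrite hlin // hLde scale1r addr0.
Qed.

Lemma imL0 (S : F -> Prop) Lam : higher_poisson S Lam -> imL S Lam 0.
Proof.
move=> hp; exists (@zeroF R n m.+1); split; first by case: hp => -[].
by rewrite (Lam0 hp).
Qed.

Lemma imL_cl (S : F -> Prop) Lam a u u' : higher_poisson S Lam ->
  imL S Lam u -> imL S Lam u' -> imL S Lam (a *: u + u').
Proof.
move=> [[_ _ hcl] hlin _ _] [al [hal ->]] [be [hbe ->]].
by exists (lincombF a al be); split; [apply: hcl | rewrite hlin].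
Qed.

Lemma extend (S : F -> Prop) Lam (M : 'M[R]_n) : higher_poisson S Lam ->
  (forall u, (u <= M)%MS -> imL S Lam u) ->
  ~ (forall al, S al -> (Lam al <= M)%MS) ->
  exists M' : 'M[R]_n, (forall u, (u <= M')%MS -> imL S Lam u) /\ (\rank M < \rank M')%N.
Proof.
move=> hp good ncov.
case: (not_all_ex_not _ _ ncov) => al hn.
have [hal hnot] := imply_to_and _ _ hn.
exists (M + Lam al)%MS; split.
  move=> u /sub_addsmxP [[u1 u2] /= ->].
  rewrite addrC (mx11_scalar u2) mul_scalar_mx; apply: imL_cl => //.
    by exists al.
  by apply: good; apply: submxMl.
have : (M < M + Lam al)%MS.
  rewrite ltmxE addsmxSl /= addsmx_sub submx_refl /=.
  by apply/negP.
by rewrite ltmxErank => /andP [].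
Qed.

Lemma exists_M (S : F -> Prop) Lam : higher_poisson S Lam ->
  exists M : 'M[R]_n, (forall u, (u <= M)%MS -> imL S Lam u) /\
                      (forall al, S al -> (Lam al <= M)%MS).
Proof.
move=> hp.
suff : forall d (M : 'M[R]_n), (n - \rank M <= d)%N ->
  (forall u, (u <= M)%MS -> imL S Lam u) ->
  exists M : 'M[R]_n, (forall u, (u <= M)%MS -> imL S Lam u) /\
                      (forall al, S al -> (Lam al <= M)%MS).
  move/(_ n 0); apply; first by lia.
  by move=> u; rewrite submx0 => /eqP ->; apply: imL0.
elim=> [|d IH] M hd good.
  case: (classic (forall al, S al -> (Lam al <= M)%MS)) => cov; first by exists M.
  have [M' [_ hr]] := extend hp good cov.
  have := rank_leq_col M'; lia.
case: (classic (forall al, S al -> (Lam al <= M)%MS)) => cov; first by exists M.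
have [M' [g' hr]] := extend hp good cov.
apply: (IH M') => //; have := rank_leq_col M'; lia.
Qed.

Lemma sum_S (S : F -> Prop) Lam (als : 'I_n -> F) (c : 'I_n -> R) (r : seq 'I_n) :
  higher_poisson S Lam -> (forall i, S (als i)) ->
  S (fun w => \sum_(i <- r) c i * als i w) /\
  Lam (fun w => \sum_(i <- r) c i * als i w) = \sum_(i <- r) c i *: Lam (als i).
Proof.
move=> hp hS; have [[_ hS0 hcl] hlin _ _] := hp.
elim: r => [|i r [IH1 IH2]].
  have -> : (fun w => \sum_(i <- [::]) c i * als i w) = @zeroF R n m.+1.
    by apply: functional_extensionality => w; rewrite big_nil.
  by rewrite big_nil (Lam0 hp).
have -> : (fun w => \sum_(j <- i :: r) c j * als j w) =
          lincombF (c i) (als i) (fun w => \sum_(j <- r) c j * als j w).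
  by apply: functional_extensionality => w; rewrite big_cons.
by rewrite big_cons; split; [apply: hcl | rewrite hlin // IH2].
Qed.

Lemma skew_slot (S : F -> Prop) Lam X (al be : F) (w : 'I_m -> V) i :
  higher_poisson S Lam -> S al -> S be ->
  be (cons X (set_slot w i (Lam al))) = - al (cons X (set_slot w i (Lam be))).
Proof.
move=> [[hkf _ _] _ _ hsk] hal hbe.
rewrite (swap_cons _ _ _ _ (hkf _ hbe)) (swap_cons _ _ _ _ (hkf _ hal)).
have := congr1 (fun f => f (set_slot w i X)) (hsk _ _ hal hbe).
by rewrite /= !contrE => ->; rewrite opprK.
Qed.

Lemma hard (L : V * F -> Prop) S Lam X :
  higher_poisson S Lam -> is_graph L S Lam -> lagrangian L ->
  polar (Ann (m:=m) (pr1 L)) X -> pr1 L X.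
Proof.
move=> hp hg hlag hX.
have [[hkf hS0 hcl] hlin _ hsk] := hp.
have [M [good cov]] := exists_M hp.
have exal (i : 'I_n) : exists al, S al /\ row i M = Lam al.
  by apply: good; apply: row_sub.
pose als i := proj1_sig (constructive_indefinite_description _ (exal i)).
have alsP i : S (als i) /\ row i M = Lam (als i).
  exact: (proj2_sig (constructive_indefinite_description _ (exal i))).
pose P := pinvmx M *m M.
have hP : P *m P = P.
  by rewrite /P mulmxA mulmxKpV // submxMl.
pose s (v : V) : F := fun w => \sum_(i <- index_enum 'I_n) (v *m pinvmx M) 0 i * als i w.
have sS v : S (s v).
  exact: (sum_S (fun i => (v *m pinvmx M) 0 i) (index_enum 'I_n) hp (fun i => (alsP i).1)).1.
have LamS v : Lam (s v) = pp P v.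
  rewrite /s (sum_S (fun i => (v *m pinvmx M) 0 i) (index_enum 'I_n) hp (fun i => (alsP i).1)).2.
  rewrite /pp /P [RHS]mulmxA (mulmx_sum_row (v *m pinvmx M) M).
  by apply: eq_bigr => i _; rewrite (alsP i).2.
have slin : linF s.
  move=> b x y w; rewrite /s mulmxDl -scalemxAl.
  rewrite mulr_sumr -big_split /=; apply: eq_bigr => i _.
  rewrite !mxE; ring.
pose phi := shiftF s X.
have kfphi Y : is_kform (phi Y) by apply: kf_shift; apply: hkf.
have linphi : linF phi by apply: shift_lin.
have ppK' a : pp P (pp P a) = pp P a by rewrite /pp -mulmxA hP.
have cphi : compatF P phi.
  move=> a b w i; rewrite /phi /shiftF.
  have := skew_slot X w i hp (sS (pp P a)) (sS (pp P b)).
  by rewrite !LamS !ppK' => ->; rewrite opprK.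
pose be := Ext P phi.
have kfbe : is_kform be.
  split; first by apply: Ext_ml => // Y; case: (kfphi Y).
  exact: Ext_alt.
have ppL al : S al -> pp P (Lam al) = Lam al.
  by move=> hal; rewrite /pp /P mulmxA mulmxKpV //; apply: cov.
have : L (X, be).
  apply/hlag; split => // -[Y al] /hg [hal ->].
  apply: functional_extensionality => ys; rewrite /pairing /= /zeroF.
  rewrite !contrE -(ppL _ hal) /be Ext_contr //; last by move=> Y'; case: (kfphi Y').
  rewrite /phi /shiftF (ppL _ hal).
  pose de := lincombF (-1) al (s (Lam al)).
  have hde : kerL S Lam de.
    split; first by apply: hcl.
    by rewrite hlin // LamS ppL // scaleN1r addNr.
  have hA : Ann (pr1 L) de.
    split; first by apply: hkf; case: hde.
    move=> Y0 hY; have := ker_Ann hp hde; case=> _; apply.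
    by apply/(pr1_imL _ hg).
  have e := hX de hA; have := congr1 (fun f => f ys) e.
  rewrite /zeroF /= contrE /de /lincombF. lra.
by move=> h; exists be.
Qed.

End Main.

(* k = m.+1, 1 <= k <= n - 1 *)
Theorem proposition3p16 (R : realType) (n m : nat) (hk : (m.+1 < n)%N)
  (L : 'rV[R]_n * mform R n m.+1 -> Prop)
  (hL : is_subspace_dir L) (hwl : weakly_lagrangian L) :
  ((forall X, capV L X -> X = 0) <->
     exists (S : mform R n m.+1 -> Prop) (Lam : mform R n m.+1 -> 'rV[R]_n),
       higher_poisson S Lam /\ is_graph L S Lam)
  /\
  (forall (S : mform R n m.+1 -> Prop) (Lam : mform R n m.+1 -> 'rV[R]_n),
     higher_poisson S Lam -> is_graph L S Lam ->
     (lagrangian L <->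
        (standard L /\ forall al, Ann (m:=m) (imL S Lam) al <-> kerL S Lam al))).
Proof.
split.
  split; first exact: part1_fwd.
  by move=> [S [Lam [hp hg]]]; apply: part1_bwd hp hg.
move=> S Lam hp hg; split.
  move=> hlag; split; last exact: part2_Ann_ker.
  move=> X; split; first exact: hard hp hg hlag.
  by move=> hX eta [_ h]; apply: h.
by move=> [hstd hak]; apply: part2_bwd hL hwl hp hg hstd hak.
Qed.
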